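(* Let $n\ge 2$, $m\ge 1$, let $\mathcal{R}=(r_{li})$ be an $(n+1)\times(n+1)$ normalized orthogonal matrix, let $\mathcal{A}\in S_{m,n+1}$ and $\mathcal{B}=\mathcal{R}^m\mathcal{A}$. Then $\mathcal{A}$ is completely decomposable if and only if $\mathcal{B}$ is completely decomposable, and $\mathcal{A}$ is regularly decomposable if and only if $\mathcal{B}$ is regularly decomposable.
   Context: $S_{m,n+1}$ is the space of real symmetric tensors $\mathcal{A}=(a_{i_1\ldots i_m})$ of order $m$ and dimension $n+1$, indices in $\{0,\ldots,n\}$; vectors are $\mathbf{x}=(x_0,\ldots,x_n)^\top$. A normalized orthogonal matrix is a matrix of the form $\mathcal{R}=\begin{pmatrix}1&\mathbf{0}^\top\\ \mathbf{0}&R\end{pmatrix}$ with $R$ an $n\times n$ real orthogonal matrix. $\mathcal{B}=\mathcal{R}^m\mathcal{A}$ means $b_{l_1\ldots l_m}=\sum_{i_1,\ldots,i_m=0}^n a_{i_1\ldots i_m}r_{l_1i_1}\cdots r_{l_mi_m}$. $\mathcal{A}$ is completely decomposable if $\mathcal{A}=\sum_{k=1}^r(\mathbf{u}^{(k)})^{\otimes m}$ for some $\mathbf{u}^{(k)}\in\mathbb{R}^{n+1}$, where $\mathbf{u}^{\otimes m}$ has entries $u_{i_1}\cdots u_{i_m}$. A vector $\mathbf{x}$ is regular if $x_0\ne0$ and $x_0^2=x_1^2+\cdots+x_n^2$. Row tensors: $\mathcal{A}_i=(a_{ii_2\ldots i_m})\in S_{m-1,n+1}$. Regularly decomposable: for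 even $m=2l$, $\mathcal{A}=\sum_{k=1}^r(\mathbf{u}^{(k)})^{\otimes m}$ with all $\mathbf{u}^{(k)}$ regular; for odd $m=2l+1$, $\mathcal{A}_0=\sum_{k=1}^r(\mathbf{u}^{(k)})^{\otimes 2l}$ with all $\mathbf{u}^{(k)}$ regular and $\mathcal{A}_i=\sum_{k=1}^r\frac{u^{(k)}_i}{u^{(k)}_0}(\mathbf{u}^{(k)})^{\otimes 2l}$ for $i=1,\ldots,n$. *)

(* Defs.v *)
From HB Require Import structures.
From mathcomp Require Import all_boot all_order all_algebra all_fingroup.
Set Implicit Arguments. Unset Strict Implicit. Unset Printing Implicit Defensive.
Import Order.TTheory GRing.Theory Num.Theory.
Local Open Scope ring_scope.

Notation tensor R m N := {ffun m.-tuple 'I_N -> R}.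

Definition symmetric_tensor (R : Type) (m N : nat) (A : tensor R m N) : Prop :=
  forall (t : m.-tuple 'I_N) (p : 'S_m),
    A [tuple tnth t (p j) | j < m] = A t.

Definition tpow (R : nzRingType) (m N : nat) (u : 'I_N -> R) : tensor R m N :=
  [ffun t : m.-tuple 'I_N => \prod_(j < m) u (tnth t j)].

Definition completely_decomposable (R : nzRingType) (m N : nat) (A : tensor R m N)
  : Prop :=
  exists (r : nat) (u : 'I_r -> 'I_N -> R), A = \sum_(k < r) tpow m (u k).

Definition tmul (R : nzRingType) (m N : nat) (Q : 'M[R]_N) (A : tensor R m N)
  : tensor R m N :=
  [ffun l : m.-tuple 'I_N =>
     \sum_(i : m.-tuple 'I_N) A i * \prod_(j < m) Q (tnth l j) (tnth i j)].

Definition normalized_orthogonal (R : nzRingType) (n : nat) (Q : 'M[R]_(n.+1))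
  : Prop :=
  exists Rm : 'M[R]_n, Rm^T *m Rm = 1%:M /\ Q = (block_mx (1%:M : 'M[R]_1) 0 0 Rm : 'M[R]_(1 + n)).

Definition regular_vec (R : nzRingType) (n : nat) (x : 'I_n.+1 -> R) : Prop :=
  x ord0 != 0 /\ x ord0 ^+ 2 = \sum_(i < n.+1 | i != ord0) x i ^+ 2.

(* entry of a tensor at an index sequence (0 if the length is not m) *)
Definition tentry (R : nzRingType) (m N : nat) (A : tensor R m N)
  (s : seq 'I_N) : R :=
  if insub s is Some t then A t else 0.

Definition row_tensor (R : nzRingType) (m N : nat) (A : tensor R m N) (i : 'I_N)
  : tensor R m.-1 N :=
  [ffun t : (m.-1).-tuple 'I_N => tentry A (i :: (t : seq 'I_N))].

Definition regularly_decomposable (R : fieldType) (m n : nat)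
  (A : tensor R m n.+1) : Prop :=
  if odd m then
    exists (r : nat) (u : 'I_r -> 'I_n.+1 -> R),
      (forall k, regular_vec (u k)) /\
      row_tensor A ord0 = \sum_(k < r) tpow m.-1 (u k) /\
      (forall i : 'I_n.+1, i != ord0 ->
         row_tensor A i =
           [ffun t => \sum_(k < r) (u k i / u k ord0) * tpow m.-1 (u k) t])
  else
    exists (r : nat) (u : 'I_r -> 'I_n.+1 -> R),
      (forall k, regular_vec (u k)) /\ A = \sum_(k < r) tpow m (u k).

(* Main.v *)
Require Import Defs.
From HB Require Import structures.
From mathcomp Require Import all_boot all_order all_algebra all_fingroup.
Import Order.TTheory GRing.Theory Num.Theory.
Set Implicit Arguments. Unset Strict Implicit. Unset Printing Implicit Defensive.
Local Open Scope ring_scope.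

Section Aux.
Variable R : fieldType.

Lemma prod_sum_tuple m N (F : 'I_m -> 'I_N -> R) :
  \prod_(j < m) \sum_(a : 'I_N) F j a =
  \sum_(t : m.-tuple 'I_N) \prod_(j < m) F j (tnth t j).
Proof.
rewrite bigA_distr_bigA /=.
rewrite (reindex (fun t : m.-tuple 'I_N => [ffun j => tnth t j])) /=; last first.
  apply: onW_bij; exists (fun f : {ffun 'I_m -> 'I_N} => [tuple f j | j < m]).
    by move=> t; apply: eq_from_tnth => j; rewrite tnth_mktuple ffunE.
  by move=> f; apply/ffunP => j; rewrite ffunE tnth_mktuple.
by apply: eq_bigr => t _; apply: eq_bigr => j _; rewrite ffunE.
Qed.

Definition mv N (Q : 'M[R]_N) (u : 'I_N -> R) : 'I_N -> R :=
  fun l => \sum_a Q l a * u a.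

Lemma tmul_lin m N (Q : 'M[R]_N) r (c : 'I_r -> R) (u : 'I_r -> 'I_N -> R) :
  tmul Q [ffun t : m.-tuple 'I_N => \sum_(k < r) c k * \prod_(j < m) u k (tnth t j)]
  = [ffun l : m.-tuple 'I_N => \sum_(k < r) c k * \prod_(j < m) mv Q (u k) (tnth l j)].
Proof.
apply/ffunP => l; rewrite !ffunE.
under eq_bigr do rewrite ffunE mulr_suml.
rewrite exchange_big /=; apply: eq_bigr => k _.
rewrite /mv prod_sum_tuple mulr_sumr; apply: eq_bigr => t _.
rewrite -mulrA -big_split /=; congr (_ * _); apply: eq_bigr => j _; exact: mulrC.
Qed.

Lemma tmul_comp m N (P Q : 'M[R]_N) (A : tensor R m N) :
  tmul P (tmul Q A) = tmul (P *m Q) A.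
Proof.
apply/ffunP => l; rewrite !ffunE.
under eq_bigr do rewrite ffunE mulr_suml.
rewrite exchange_big /=; apply: eq_bigr => i' _.
rewrite (eq_bigr (fun j => \sum_a P (tnth l j) a * Q a (tnth i' j))); last by move=> j _; rewrite mxE.
rewrite prod_sum_tuple mulr_sumr; apply: eq_bigr => t _.
rewrite -mulrA -big_split /=; congr (_ * _); apply: eq_bigr => j _; exact: mulrC.
Qed.

Lemma tmul_id m N (A : tensor R m N) : tmul 1%:M A = A.
Proof.
apply/ffunP => l; rewrite ffunE (bigD1 l) //=.
rewrite [X in _ * X]big1 ?mulr1; last by move=> j _; rewrite mxE eqxx mulr1n.
rewrite big1 ?addr0 // => i Hi.
have /existsP[j Hj] : [exists j, tnth l j != tnth i j].
  rewrite -negb_forall; apply/negP => /forallP H; move/eqP: Hi; apply.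
  by apply: eq_from_tnth => j; have /eqP := H j.
by rewrite (bigD1 j) //= mxE (negbTE Hj) mulr0n mul0r mulr0.
Qed.

End Aux.

Section Block.
Variable R : fieldType.
Variable n : nat.
Variable Rm : 'M[R]_n.
Let Q : 'M[R]_(n.+1) := block_mx (1%:M : 'M[R]_1) 0 0 Rm.

Lemma ord0_lshift : (ord0 : 'I_n.+1) = lshift n (ord0 : 'I_1).
Proof. exact: val_inj. Qed.
Lemma lift_rshift (i : 'I_n) : lift ord0 i = rshift 1 i :> 'I_n.+1.
Proof. exact: val_inj. Qed.

Lemma Q00 : Q ord0 ord0 = 1.
Proof. rewrite /Q ord0_lshift; apply: (etrans (block_mxEul _ _ _ _ _ _)); by rewrite mxE. Qed.
Lemma Q0l j : Q ord0 (lift ord0 j) = 0.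
Proof. rewrite /Q lift_rshift ord0_lshift; apply: (etrans (block_mxEur _ _ _ _ _ _)); by rewrite mxE. Qed.
Lemma Ql0 i : Q (lift ord0 i) ord0 = 0.
Proof. rewrite /Q lift_rshift ord0_lshift; apply: (etrans (block_mxEdl _ _ _ _ _ _)); by rewrite mxE. Qed.
Lemma Qll i j : Q (lift ord0 i) (lift ord0 j) = Rm i j.
Proof. rewrite /Q !lift_rshift; exact: (block_mxEdr _ _ _ _ _ _). Qed.

Lemma mv0 u : mv Q u ord0 = u ord0.
Proof.
rewrite /mv big_ord_recl Q00 mul1r big1 ?addr0 // => j _; by rewrite Q0l mul0r.
Qed.
Lemma mvl u i : mv Q u (lift ord0 i) = \sum_j Rm i j * u (lift ord0 j).
Proof.
rewrite /mv big_ord_recl Ql0 mul0r add0r; apply: eq_bigr => j _; by rewrite Qll.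
Qed.

Lemma sum_neq0 (F : 'I_n.+1 -> R) :
  \sum_(i < n.+1 | i != ord0) F i = \sum_(i < n) F (lift ord0 i).
Proof.
rewrite big_mkcond big_ord_recl /= ?eqxx ?add0r; apply: eq_bigr => i _.
by [].
Qed.

Lemma norm_pres (w : 'I_n -> R) : Rm^T *m Rm = 1%:M ->
  \sum_i (\sum_j Rm i j * w j) ^+ 2 = \sum_j w j ^+ 2.
Proof.
move=> H; set x : 'cV[R]_n := \col_j w j.
have key : ((Rm *m x)^T *m (Rm *m x)) ord0 ord0 = (x^T *m x) ord0 ord0.
  by rewrite trmx_mul -mulmxA (mulmxA Rm^T) H mul1mx.
move: key; rewrite !mxE.
under eq_bigr do rewrite !mxE.
under [X in _ = X -> _]eq_bigr do rewrite !mxE.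
move=> <-; apply: eq_bigr => i _; rewrite expr2; congr (_ * _);
  by apply: eq_bigr => j _; rewrite mxE.
Qed.

Lemma regular_pres u : Rm^T *m Rm = 1%:M -> regular_vec u -> regular_vec (mv Q u).
Proof.
move=> H [H0 H1]; split; first by rewrite mv0.
rewrite mv0 H1 !sum_neq0.
under [RHS]eq_bigr do rewrite mvl.
by rewrite norm_pres.
Qed.

End Block.

Section Odd.
Variable R : fieldType.

Definition Gt m' N r (c : 'I_r -> R) (u : 'I_r -> 'I_N -> R) : tensor R m'.+1 N :=
  [ffun t => \sum_(k < r) c k * \prod_(j < m'.+1) u k (tnth t j)].

Lemma row_tensorE m' N (A : tensor R m'.+1 N) i (t : m'.-tuple 'I_N) :
  row_tensor A i t = A [tuple of i :: t].
Proof.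
rewrite ffunE /tentry.
case: insubP => [t' _ Ht'|]; first by congr (A _); apply: val_inj.
by move=> /negP; rewrite [in X in ~ X]/= [in X in ~ X]size_tuple eqxx.
Qed.

Lemma rows_eq m' N (A G : tensor R m'.+1 N) :
  (forall i, row_tensor A i = row_tensor G i) -> A = G.
Proof.
move=> H; apply/ffunP => t.
move: (H (thead t)) => /ffunP /(_ [tuple of behead t]).
by rewrite !row_tensorE -tuple_eta.
Qed.

Lemma row_G m' N r (c : 'I_r -> R) (u : 'I_r -> 'I_N -> R) i :
  row_tensor (Gt m' c u) i =
  [ffun t' => \sum_(k < r) c k * (u k i * \prod_(j < m') u k (tnth t' j))].
Proof.
apply/ffunP => t'; rewrite row_tensorE !ffunE; apply: eq_bigr => k _.
by rewrite big_ord_recl tnth0; under eq_bigr do rewrite tnthS.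
Qed.

Lemma odd_fwd m' n r (A : tensor R m'.+1 n.+1) (u : 'I_r -> 'I_n.+1 -> R) :
  (forall k, u k ord0 != 0) ->
  row_tensor A ord0 = \sum_(k < r) tpow m' (u k) ->
  (forall i : 'I_n.+1, i != ord0 ->
         row_tensor A i =
           [ffun t => \sum_(k < r) (u k i / u k ord0) * tpow m' (u k) t]) ->
  A = Gt m' (fun k => (u k ord0)^-1) u.
Proof.
move=> Hu H0 Hi; apply: rows_eq => i; rewrite row_G.
case: (eqVneq i ord0) => [->|Hi'].
  rewrite H0; apply/ffunP => t; rewrite sum_ffunE ffunE; apply: eq_bigr => k _.
  by rewrite ffunE mulrA mulVf ?mul1r.
rewrite Hi //; apply/ffunP => t; rewrite !ffunE; apply: eq_bigr => k _.
by rewrite ffunE mulrA [_^-1 * _]mulrC.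
Qed.

Lemma odd_bwd m' n r (A : tensor R m'.+1 n.+1) (u : 'I_r -> 'I_n.+1 -> R) :
  (forall k, u k ord0 != 0) ->
  A = Gt m' (fun k => (u k ord0)^-1) u ->
  row_tensor A ord0 = \sum_(k < r) tpow m' (u k) /\
  (forall i : 'I_n.+1, i != ord0 ->
         row_tensor A i =
           [ffun t => \sum_(k < r) (u k i / u k ord0) * tpow m' (u k) t]).
Proof.
move=> Hu ->; split.
  rewrite row_G; apply/ffunP => t; rewrite sum_ffunE ffunE; apply: eq_bigr => k _.
  by rewrite ffunE mulrA mulVf ?mul1r.
move=> i _; rewrite row_G; apply/ffunP => t; rewrite !ffunE; apply: eq_bigr => k _.
by rewrite ffunE mulrA [_^-1 * _]mulrC.
Qed.

End Odd.

Lemma sum_tpow (R : fieldType) m N r (u : 'I_r -> 'I_N -> R) :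
  \sum_(k < r) tpow m (u k) =
  [ffun t : m.-tuple 'I_N => \sum_(k < r) 1 * \prod_(j < m) u k (tnth t j)].
Proof.
apply/ffunP => t; rewrite sum_ffunE ffunE; apply: eq_bigr => k _.
by rewrite ffunE mul1r.
Qed.

Lemma cd_fwd (R : fieldType) m N (Q : 'M[R]_N) (A : tensor R m N) :
  completely_decomposable A -> completely_decomposable (tmul Q A).
Proof.
case=> r [u ->]; exists r, (fun k => mv Q (u k)).
by rewrite !sum_tpow tmul_lin.
Qed.

Lemma rd_fwd (R : fieldType) m n (Q : 'M[R]_n.+1) (A : tensor R m n.+1) :
  normalized_orthogonal Q ->
  regularly_decomposable A -> regularly_decomposable (tmul Q A).
Proof.
case=> Rm [HR HQ].
have Hreg := regular_pres HR.
have Hm0 : forall u, mv Q u ord0 = u ord0 by move=> u; rewrite HQ mv0.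
rewrite /regularly_decomposable; case: ifP => Hodd.
  case: m A Hodd => // m' A _ /=.
  case=> r [u [Hu [H0 Hi]]].
  have Hu0 : forall k, u k ord0 != 0 by move=> k; case: (Hu k).
  have EA := odd_fwd Hu0 H0 Hi.
  exists r, (fun k => mv Q (u k)); split.
    by move=> k; rewrite HQ; apply: Hreg.
  apply: odd_bwd; first by move=> k; rewrite Hm0.
  rewrite EA /Gt tmul_lin; apply/ffunP => t; rewrite !ffunE.
  by apply: eq_bigr => k _; rewrite Hm0.
case=> r [u [Hu ->]]; exists r, (fun k => mv Q (u k)); split.
  by move=> k; rewrite HQ; apply: Hreg.
by rewrite !sum_tpow tmul_lin.
Qed.

Lemma no_inv (R : fieldType) n (Q : 'M[R]_n.+1) :
  normalized_orthogonal Q -> normalized_orthogonal Q^T /\ Q^T *m Q = 1%:M.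
Proof.
case=> Rm [HR ->]; split.
  exists Rm^T; split; first by rewrite trmxK; exact: mulmx1C.
  have key : forall B : 'M[R]_(1 + n), B = block_mx 1%:M 0 0 Rm ->
    B^T = block_mx 1%:M 0 0 Rm^T.
    by move=> B ->; rewrite tr_block_mx !trmx0 trmx1.
  exact: key.
have key : forall B : 'M[R]_(1 + n), B = block_mx 1%:M 0 0 Rm -> B^T *m B = 1%:M.
  move=> B ->; rewrite tr_block_mx !trmx0 trmx1 mulmx_block.
  rewrite !mul1mx !mulmx0 !mul0mx !addr0 !add0r HR.
  by rewrite -scalar_mx_block.
exact: key.
Qed.

Theorem theorem4p1 (R : realFieldType) (n m : nat) (Q : 'M[R]_(n.+1))
  (A : tensor R m n.+1) :
  (2 <= n)%N -> (1 <= m)%N ->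
  normalized_orthogonal Q -> symmetric_tensor A ->
  (completely_decomposable A <-> completely_decomposable (tmul Q A)) /\
  (regularly_decomposable A <-> regularly_decomposable (tmul Q A)).
Proof.
move=> _ _ HQ _.
have [HT HTQ] := no_inv HQ.
have back : tmul Q^T (tmul Q A) = A by rewrite tmul_comp HTQ tmul_id.
split; split.
- exact: cd_fwd.
- by move=> /(cd_fwd Q^T); rewrite back.
- exact: rd_fwd.
- by move=> /(rd_fwd HT); rewrite back.
Qed.
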